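(* Let $n, r$ be nonnegative integers with $n\geqslant\lceil r/2\rceil+2$. Then $m(L(K_n),r)\leqslant\lfloor (r+2)^2/8\rfloor$.
   Context: All graphs are finite, simple and undirected. For a nonnegative integer $r$ and a graph $G$, the $r$-neighbor bootstrap percolation process on $G$ starts with a set $A_0\subseteq V(G)$ of initially active vertices, and for $i\geqslant 1$, $A_i=A_{i-1}\cup\{v\in V(G) : |N(v)\cap A_{i-1}|\geqslant r\}$, where $N(v)$ is the set of neighbors of $v$. The set $A_0$ is a percolating set if $\bigcup_{i\geqslant 0}A_i=V(G)$; $m(G,r)$ is the minimum size of a percolating set. $L(G)$ is the line graph of $G$ (vertex set $E(G)$, two vertices adjacent iff the edges share an endpoint), and $K_n$ is the complete graph on $n$ vertices. *)

(* Defs.v *)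
From mathcomp Require Import all_boot.
Set Implicit Arguments. Unset Strict Implicit. Unset Printing Implicit Defensive.

Definition simple_graph (T : finType) (e : rel T) :=
  symmetric e /\ irreflexive e.

Definition nbhd (T : finType) (e : rel T) (v : T) : {set T} := [set u | e v u].

Definition bp_step (T : finType) (e : rel T) (r : nat) (A : {set T}) : {set T} :=
  A :|: [set v | r <= #|nbhd e v :&: A|].

Definition bp_iter (T : finType) (e : rel T) (r : nat) (A0 : {set T}) (i : nat) :=
  iter i (bp_step e r) A0.

Definition percolating (T : finType) (e : rel T) (r : nat) (A0 : {set T}) : Prop :=
  forall v : T, exists i, v \in bp_iter e r A0 i.

(* "m(G,r) <= k" : there is a percolating set of size at most k
   (m(G,r) is the minimum size of a percolating set). *)
Definition m_perc_le (T : finType) (e : rel T) (r k : nat) : Prop :=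
  exists A0 : {set T}, #|A0| <= k /\ percolating e r A0.

(* Line graph of K_n: vertices are the edges of K_n, i.e. 2-element subsets
   of 'I_n; two are adjacent iff distinct and they share an endpoint. *)
Definition KnEdge (n : nat) := {S : {set 'I_n} | #|S| == 2}.

Definition LKn_adj (n : nat) : rel (KnEdge n) :=
  fun a b => (a != b) && [exists x, (x \in val a) && (x \in val b)].

(* Main.v *)
Require Import Defs.
From mathcomp Require Import all_boot zify.
Set Implicit Arguments. Unset Strict Implicit. Unset Printing Implicit Defensive.


Definition reached (T : finType) (e : rel T) (r : nat) (A0 : {set T}) (v : T) :=
  exists i, v \in bp_iter e r A0 i.

Lemma bp_iter_mono (T : finType) (e : rel T) r A0 i j :
  i <= j -> bp_iter e r A0 i \subset bp_iter e r A0 j.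
Proof.
move=> /subnKC <-; elim: (j - i) => [|k IH]; first by rewrite addn0.
apply: (subset_trans IH); rewrite addnS /bp_iter iterS /bp_step; exact: subsetUl.
Qed.

Lemma reached_seq (T : finType) (e : rel T) r A0 (s : seq T) :
  (forall v, v \in s -> reached e r A0 v) ->
  exists i, forall v, v \in s -> v \in bp_iter e r A0 i.
Proof.
elim: s => [|a s IH] H; first by exists 0.
have [i Hi] := IH (fun v hv => H v ltac:(by rewrite in_cons hv orbT)).
have [k Hk] := H a (mem_head _ _).
exists (maxn i k) => v; rewrite in_cons => /orP [/eqP ->|hv].
  exact: (subsetP (bp_iter_mono e r A0 (leq_maxr i k))).
exact: (subsetP (bp_iter_mono e r A0 (leq_maxl i k))) _ (Hi v hv).
Qed.

Lemma reached_step (T : finType) (e : rel T) r A0 (v : T) (B : {set T}) :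
  B \subset nbhd e v -> r <= #|B| -> (forall u, u \in B -> reached e r A0 u) ->
  reached e r A0 v.
Proof.
move=> sB hr hB.
have [i Hi] := reached_seq (s := enum B) (fun u hu => hB u ltac:(by rewrite mem_enum in hu)).
exists i.+1; rewrite /bp_iter iterS /bp_step inE; apply/orP; right.
rewrite inE; apply: (leq_trans hr); apply: subset_leq_card.
apply/subsetP => u hu; rewrite inE (subsetP sB u hu) /=.
by apply: Hi; rewrite mem_enum.
Qed.

Definition itv n a b := [set z : 'I_n | (a <= z) && (z < b)].

Lemma card_itv n a b : b <= n -> #|itv n a b| = b - a.
Proof.
elim: b => [|b IH] hb.
  rewrite sub0n; apply/eqP; rewrite cards_eq0; apply/eqP/setP => z.
  by rewrite !inE ltn0 andbF.
case: (leqP a b) => hab.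
  have -> : itv n a b.+1 = itv n a b :|: [set Ordinal hb].
    by apply/setP => z; rewrite !inE -val_eqE /=; lia.
  rewrite cardsU IH ?(ltnW hb) // cards1.
  have -> : itv n a b :&: [set Ordinal hb] = set0.
    by apply/setP => z; rewrite !inE -val_eqE /=; lia.
  rewrite cards0; lia.
have -> : b.+1 - a = 0 by lia.
apply/eqP; rewrite cards_eq0; apply/eqP/setP => z; rewrite !inE; lia.
Qed.


Definition RR n r (A0 : {set KnEdge n}) (x y : 'I_n) :=
  forall e : KnEdge n, val e = [set x; y] -> reached (@LKn_adj n) r A0 e.

Lemma RR_sym (n r : nat) (A0 : {set KnEdge n}) (x y : 'I_n) : RR r A0 x y -> RR r A0 y x.
Proof. by move=> H e He; apply: H; rewrite He setUC. Qed.

Lemma val_insubd2 n (e : KnEdge n) (x z : 'I_n) : x != z ->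
  val (insubd e [set x; z] : KnEdge n) = [set x; z].
Proof. by move=> hxz; rewrite insubdK // unfold_in /= cards2 hxz. Qed.

Lemma pair_rule (n r : nat) (A0 : {set KnEdge n}) (x y : 'I_n) (X Y : {set 'I_n}) :
  x != y -> x \notin X -> y \notin X -> x \notin Y -> y \notin Y ->
  (forall z, z \in X -> RR r A0 x z) -> (forall z, z \in Y -> RR r A0 y z) ->
  r <= #|X| + #|Y| -> RR r A0 x y.
Proof.
move=> hxy hxX hyX hxY hyY HX HY hr e He.
pose f (u : 'I_n) (z : 'I_n) : KnEdge n := insubd e [set u; z].
have nX z : z \in X -> (x != z) && (y != z).
  by move=> hz; apply/andP; split; apply/eqP => E; subst z; [rewrite hz in hxX|rewrite hz in hyX].
have nY z : z \in Y -> (x != z) && (y != z).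
  by move=> hz; apply/andP; split; apply/eqP => E; subst z; [rewrite hz in hxY|rewrite hz in hyY].
have injf u : {in [pred z | u != z] &, injective (f u)}.
  move=> z1 z2 h1 h2 E.
  have := congr1 val E; rewrite /f !val_insubd2 // => E2.
  have : z1 \in [set u; z2] by rewrite -E2 !inE eqxx orbT.
  rewrite !inE => /orP [/eqP E3|/eqP //]; subst z1; by rewrite inE eqxx in h1.
have cX : #|f x @: X| = #|X|.
  apply: card_in_imset => z1 z2 h1 h2; apply: injf; rewrite inE.
    by case/andP: (nX _ h1). by case/andP: (nX _ h2).
have cY : #|f y @: Y| = #|Y|.
  apply: card_in_imset => z1 z2 h1 h2; apply: injf; rewrite inE.
    by case/andP: (nY _ h1). by case/andP: (nY _ h2).
have dis : f x @: X :&: f y @: Y = set0.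
  apply/setP => u; rewrite !inE; apply/negP => /andP [/imsetP [z1 h1 ->] /imsetP [z2 h2 E]].
  have := congr1 val E; rewrite /f !val_insubd2. all: try (by case/andP: (nY _ h2)); try (by case/andP: (nX _ h1)).
  move=> E2; have : x \in [set y; z2] by rewrite -E2 !inE eqxx.
  rewrite !inE => /orP [/eqP E3|/eqP E3]; first by rewrite E3 eqxx in hxy.
  by subst z2; rewrite h2 in hxY.
apply: (@reached_step _ _ _ _ e (f x @: X :|: f y @: Y)).
- apply/subsetP => u /setUP [] /imsetP [z hz ->]; rewrite inE /LKn_adj.
  + case/andP: (nX _ hz) => h1 h2; apply/andP; split.
      apply/eqP => E; have := congr1 val E; rewrite /f val_insubd2 // He => E2.
      have : z \in [set x; y] by rewrite E2 !inE eqxx orbT.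
      by rewrite !inE (eq_sym z) (eq_sym z) (negbTE h1) (negbTE h2).
    apply/existsP; exists x; rewrite He /f val_insubd2 // !inE eqxx //.
  + case/andP: (nY _ hz) => h1 h2; apply/andP; split.
      apply/eqP => E; have := congr1 val E; rewrite /f val_insubd2 // He => E2.
      have : z \in [set x; y] by rewrite E2 !inE eqxx orbT.
      by rewrite !inE (eq_sym z) (eq_sym z) (negbTE h1) (negbTE h2).
    apply/existsP; exists y; rewrite He /f val_insubd2 // !inE eqxx orbT //.
- by rewrite cardsU dis cards0 subn0 cX cY.
- move=> u /setUP [] /imsetP [z hz ->].
  + apply: (HX z hz); rewrite /f val_insubd2 //; by case/andP: (nX _ hz).
  + apply: (HY z hz); rewrite /f val_insubd2 //; by case/andP: (nY _ hz).
Qed.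


Definition E0 (n r h a b : nat) : bool :=
  ((a < h) && (a + n - h <= b)) ||
  ((r %% 2 == 0) && (b == a.+1) && (a < h) && ((h - a) %% 2 == 1)).

Definition A0 (n r h : nat) : {set KnEdge n} :=
  [set e | [exists a : 'I_n, exists b : 'I_n,
     (a < b) && E0 n r h a b && (val e == [set a; b])]].

Lemma base (n r h : nat) (a b : 'I_n) : a < b -> E0 n r h a b -> RR r (A0 n r h) a b.
Proof.
move=> hab hE e He; exists 0; rewrite /bp_iter /= inE; apply/existsP; exists a.
by apply/existsP; exists b; rewrite hab hE He eqxx.
Qed.

Lemma cardsU_dis (T : finType) (A B : {set T}) :
  A :&: B = set0 -> #|A :|: B| = #|A| + #|B|.
Proof. by move=> H; rewrite cardsU H cards0 subn0. Qed.

Lemma pump (n r h j : nat) (c : 'I_n) : h + 2 <= n -> h = r %/ 2 + r %% 2 ->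
  (c : nat) = j -> j < h ->
  (forall c' y : 'I_n, c' < j -> c' != y -> RR r (A0 n r h) c' y) ->
  forall y : 'I_n, j < y -> RR r (A0 n r h) c y.
Proof.
move=> hn hh hc hj U.
suff H : forall k (y : 'I_n), y < k -> j < y -> RR r (A0 n r h) c y.
  by move=> y; apply: (H y.+1).
elim=> [|k IH] y; first by rewrite ltn0.
rewrite ltnS leq_eqVlt => /orP [/eqP hyk|hyk]; last by apply: IH.
move=> hjy.
case hE: (E0 n r h c y); first by apply: base; rewrite // hc.
move: hE; rewrite /E0 hc => hE.
set P := [set z : 'I_n | (r %% 2 == 0) && (y <= h) &&
   ((((h - y) %% 2 == 1) && ((z : nat) == y.+1)) || (((h - y) %% 2 == 0) && ((z : nat) == y.-1)))].
have yn := ltn_ord y.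
apply: (@pair_rule _ _ _ _ _ (itv n 0 j :|: itv n j.+1 y :|: itv n (j + n - h) n)
                       (itv n 0 j :|: itv n (y + n - h) n :|: P)).
- by rewrite -val_eqE /= hc; lia.
- by rewrite !inE hc; lia.
- by rewrite !inE; lia.
- by rewrite !inE hc; lia.
- by rewrite !inE; lia.
- move=> z; rewrite !inE => /orP [/orP [hz|hz]|hz].
  + apply: RR_sym; apply: U; first lia. by rewrite -val_eqE /= hc; lia.
  + apply: IH; lia.
  + apply: base; first by rewrite hc; lia.
    by rewrite /E0 hc; have := ltn_ord z; lia.
- move=> z; rewrite !inE => /orP [/orP [hz|hz]|hz].
  + apply: RR_sym; apply: U; first lia. by rewrite -val_eqE /=; lia.
  + have zn := ltn_ord z. apply: base; first lia.
    by rewrite /E0; lia.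
  + case/andP: hz => /andP [hev hyh] /orP [/andP [ho /eqP hz]|/andP [ho /eqP hz]].
      apply: base; first lia. by rewrite /E0; lia.
    apply: RR_sym; apply: base; first lia. by rewrite /E0; lia.
- rewrite !cardsU_dis; first last.
  + by apply/setP => z; rewrite !inE; lia.
  + by apply/setP => z; rewrite !inE; lia.
  + by apply/setP => z; rewrite !inE; lia.
  + by apply/setP => z; rewrite !inE; lia.
  rewrite !card_itv; try lia.
  case: (boolP ((r %% 2 == 0) && (y <= h))) => hc2.
    have hp : (if (h - y) %% 2 == 1 then y.+1 else y.-1) < n.
      by case: ifP; lia.
    have : 0 < #|P|.
      apply/card_gt0P; exists (Ordinal hp); rewrite inE /=.
      by case: ifP; lia.
    clear hp hE IH U; move: hc2 => /andP [/eqP h1 h2]; move: #|P| => m hP; have := divn_eq r 2; lia.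
  lia.
Qed.


Lemma univ (n r h : nat) : h + 2 <= n -> h = r %/ 2 + r %% 2 ->
  forall j, j <= h -> forall c y : 'I_n, c < j -> c != y -> RR r (A0 n r h) c y.
Proof.
move=> hn hh; elim=> [|j IH] hj c y; first by rewrite ltn0.
rewrite ltnS leq_eqVlt => /orP [/eqP hc|hc] hcy; last by apply: IH => //; lia.
case: (ltngtP y c) => [hyc|hcy'|E].
- apply: RR_sym; apply: IH; first lia. by rewrite -hc. by rewrite eq_sym.
- apply: (@pump n r h j c hn hh hc); [lia| |by rewrite -hc].
  by move=> c' y' h1 h2; apply: IH => //; lia.
- by move/val_inj: E => E; rewrite E eqxx in hcy.
Qed.

Lemma allR (n r h : nat) : h + 2 <= n -> h = r %/ 2 + r %% 2 ->
  forall x y : 'I_n, x != y -> RR r (A0 n r h) x y.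
Proof.
move=> hn hh x y hxy.
have U := @univ n r h hn hh h (leqnn h).
case: (ltnP x h) => hx; first exact: U.
case: (ltnP y h) => hy; first by apply: RR_sym; apply: U; rewrite // eq_sym.
apply: (@pair_rule _ _ _ _ _ (itv n 0 h) (itv n 0 h)) => //.
- by rewrite inE; lia.
- by rewrite inE; lia.
- by rewrite inE; lia.
- by rewrite inE; lia.
- move=> z; rewrite inE => hz; apply: RR_sym; apply: U; first lia.
  by rewrite -val_eqE /=; lia.
- move=> z; rewrite inE => hz; apply: RR_sym; apply: U; first lia.
  by rewrite -val_eqE /=; lia.
- rewrite card_itv; lia.
Qed.

Lemma perc (n r h : nat) : h + 2 <= n -> h = r %/ 2 + r %% 2 ->
  percolating (@LKn_adj n) r (A0 n r h).
Proof.
move=> hn hh v.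
have /cards2P [x [y [hxy hv]]] := valP v.
exact: (@allR n r h hn hh x y hxy v hv).
Qed.


Lemma card_sum (T : finType) (A : {set T}) : #|A| = \sum_(x : T) (x \in A).
Proof. by rewrite -sum1_card big_mkcond. Qed.

Lemma sumS (ev : bool) m :
  2 * (\sum_(i < m) (i.+1 + (ev && (i.+1 %% 2 == 1)))) = m * m.+1 + (if ev then m + m %% 2 else 0).
Proof.
elim: m => [|m IH]; first by rewrite big_ord0; case: ev.
rewrite big_ord_recr /= mulnDr IH; clear IH; case: ev => /=; case: (m.+1 %% 2 == 1) /eqP => /= ?; lia.
Qed.

Lemma cardA0 (n r h : nat) : h + 2 <= n -> h = r %/ 2 + r %% 2 ->
  #|A0 n r h| <= (r + 2) ^ 2 %/ 8.
Proof.
move=> hn hh.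
pose P2 := [set p : 'I_n * 'I_n | (p.1 < p.2) && E0 n r h p.1 p.2].
pose ev := r %% 2 == 0.
have step1 : #|A0 n r h| <= #|P2|.
  case: (set_0Vmem (A0 n r h)) => [->|[e0 _]]; first by rewrite cards0.
  apply: (leq_trans _ (leq_imset_card (fun p : 'I_n * 'I_n => insubd e0 [set p.1; p.2] : KnEdge n) P2)).
  apply: subset_leq_card; apply/subsetP => e; rewrite inE => /existsP [a /existsP [b /andP [/andP [hab hE] /eqP he]]].
  apply/imsetP; exists (a, b); first by rewrite inE /= hab hE.
  apply: val_inj; rewrite val_insubd2 /= ?he //; by rewrite -val_eqE /=; lia.
have step2 : #|P2| <= \sum_(a < n) (if a < h then (h - a) + (ev && ((h - a) %% 2 == 1)) else 0).
  have -> : #|P2| = \sum_(a : 'I_n) \sum_(b : 'I_n) nat_of_bool ((a, b) \in P2).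
    by rewrite card_sum pair_bigA; apply: eq_bigr => -[a b] _.
  apply: leq_sum => a _.
  have -> : \sum_(b : 'I_n) nat_of_bool ((a, b) \in P2) = #|[set b : 'I_n | (a, b) \in P2]|.
    by rewrite card_sum; apply: eq_bigr => b _; rewrite inE.
  case: ifP => ha; last first.
    rewrite leqn0 cards_eq0; apply/eqP/setP => b; rewrite !inE /E0 /=; lia.
  apply: (@leq_trans #|itv n (a + n - h) n :|: (if ev && ((h - a) %% 2 == 1) then itv n a.+1 a.+2 else set0)|).
    apply: subset_leq_card; apply/subsetP => b; rewrite !inE /E0 /= => hb.
    have := ltn_ord b; case: ifP => hc; rewrite !inE; rewrite /ev in hc; lia.
  apply: (leq_trans (leq_card_setU _ _)); rewrite card_itv //.
  case: ifP => hc; rewrite ?cards0 ?card_itv; lia.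
have step3 : \sum_(a < n) (if a < h then (h - a) + (ev && ((h - a) %% 2 == 1)) else 0)
   = \sum_(i < h) (i.+1 + (ev && (i.+1 %% 2 == 1))).
  rewrite -(big_mkord xpredT (fun a => if a < h then (h - a) + (ev && ((h - a) %% 2 == 1)) else 0)).
  rewrite (big_cat_nat _ (n := h)) //=; last lia.
  rewrite [X in _ + X]big_nat_cond [X in _ + X]big1 ?addn0; last first.
    by move=> i /andP [/andP [hi _] _]; rewrite ltnNge hi.
  rewrite big_nat_rev /= -(big_mkord xpredT (fun i => i.+1 + (ev && (i.+1 %% 2 == 1)))).
  apply: eq_big_nat => i hi; rewrite add0n ifT; last lia.
  have -> : h - (h - i.+1) = i.+1 by lia.
  by [].
have key := sumS ev h.
rewrite leq_divRL //.
apply: (@leq_trans (#|P2| * 8)); first by rewrite leq_mul2r step1 orbT.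
apply: (@leq_trans ((\sum_(i < h) (i.+1 + (ev && (i.+1 %% 2 == 1)))) * 8)).
  by rewrite leq_mul2r -step3 step2 orbT.
move: key; move: (\sum_(i < h) _) => S.
have := divn_eq r 2; rewrite /ev.
case: eqP => he /=; nia.
Qed.

Theorem lemma5p2 (n r : nat) :
  (r %/ 2 + r %% 2) + 2 <= n ->
  m_perc_le (@LKn_adj n) r ((r + 2) ^ 2 %/ 8).
Proof.
move=> hn.
exists (A0 n r (r %/ 2 + r %% 2)); split.
- exact: cardA0.
- exact: perc.
Qed.
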